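(* Let $a$ and $i$ be positive integers. Then $$\binom{3a+i}{a+i}_q=\sum_{k\geq0}q^{(a-k)(i-k)}\left[\binom{i+k}{2k}_q+q^{a+i}\binom{i+k-1}{2k-1}_q\right]\binom{3a+i}{a-k}_q.$$
   Context: For nonnegative integers $n$, $[n]!_q=\prod_{j=1}^n\frac{1-q^j}{1-q}$ (with $[0]!_q=1$), and for integers $0\le k\le n$, $\binom{n}{k}_q=\frac{[n]!_q}{[k]!_q[n-k]!_q}$ (Gaussian polynomial); set $\binom{n}{k}_q=0$ if $k<0$ or $k>n$. *)

(* Defs.v *)
From mathcomp Require Import all_boot all_order all_algebra.
From mathcomp Require Import fraction.
Set Implicit Arguments. Unset Strict Implicit. Unset Printing Implicit Defensive.
Import Order.TTheory GRing.Theory Num.Theory.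
Local Open Scope ring_scope.

(* Gaussian polynomials are taken in the field of rational functions Q(q),
   i.e. the fraction field of {poly rat}, with q the indeterminate 'X. *)
Definition QF := {fraction {poly rat}}.
Definition qq : QF := @FracField.tofrac _ (('X : {poly rat})).

Definition qfact (n : nat) : QF :=
  \prod_(1 <= j < n.+1) ((1 - qq ^+ j) / (1 - qq)).

Definition qbinom (n k : int) : QF :=
  if (0 <= k) && (k <= n) then
    qfact `|n|%N / (qfact `|k|%N * qfact `|n - k|%N)
  else 0.

(* Main.v *)
Require Import Defs.
From mathcomp Require Import all_boot all_order all_algebra.
From mathcomp Require Import fraction.
From mathcomp Require Import ring zify.
Import Order.TTheory GRing.Theory Num.Theory.
Local Open Scope ring_scope.

Definition u (m : nat) : QF := 1 - qq ^+ m.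

Lemma qq_neq0 : qq != 0.
Proof. by rewrite /qq tofrac_eq0 polyX_eq0. Qed.

Lemma qqX_neq1 m : (0 < m)%N -> qq ^+ m != 1.
Proof.
move=> hm; rewrite /qq -tofracXn -tofrac1 tofrac_eq; apply/eqP => h.
by have := congr1 (fun p : {poly rat} => size p) h; rewrite size_polyXn size_poly1 => -[]; case: m hm h.
Qed.

Lemma u_neq0 m : (0 < m)%N -> u m != 0.
Proof. by move=> hm; rewrite /u subr_eq0 eq_sym qqX_neq1. Qed.

Lemma u0 : u 0 = 0.
Proof. by rewrite /u expr0 subrr. Qed.

Lemma oneq_neq0 : 1 - qq != 0.
Proof. by have := u_neq0 1 isT; rewrite /u expr1. Qed.

Lemma qfact0 : qfact 0 = 1.
Proof. by rewrite /qfact big_geq. Qed.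

Lemma qfactS m : qfact m.+1 = qfact m * (u m.+1 / (1 - qq)).
Proof. by rewrite /qfact big_nat_recr. Qed.

Lemma qfact_neq0 m : qfact m != 0.
Proof.
elim: m => [|m ih]; first by rewrite qfact0; exact: oner_neq0.
rewrite qfactS; apply: mulf_neq0; first exact: ih. apply: mulf_neq0; first exact: u_neq0.
rewrite invr_eq0; exact: oneq_neq0.
Qed.

Lemma qbinomE (N K : nat) : qbinom N%:Z K%:Z =
  if (K <= N)%N then qfact N / (qfact K * qfact (N - K)) else 0.
Proof.
rewrite /qbinom lez_nat le0z_nat /=; case: leqP => h //.
by rewrite subzn // !absz_nat.
Qed.

Lemma qbinom_negK (N K : int) : K < 0 -> qbinom N K = 0.
Proof. by move=> h; rewrite /qbinom leNgt h. Qed.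

Lemma qbinom_negN (N K : int) : N < 0 -> qbinom N K = 0.
Proof.
move=> h; rewrite /qbinom; case: ifP => // /andP [h1 h2].
by have := lt_le_trans (le_lt_trans h1 (le_lt_trans h2 h)) (lexx 0); rewrite ltxx.
Qed.



Lemma aL1 (F : fieldType) (fN fK fR uK uR c : F) : fK != 0 -> fR != 0 -> uK != 0 -> uR != 0 -> c != 0 ->
 uK * (fN / (fK * (uK / c) * fR)) = uR * (fN / (fK * (fR * (uR / c)))).
Proof. move=> h1 h2 h3 h4 h5; field; by rewrite h1 h2 h3 h4 h5. Qed.

Lemma L1 (N K : nat) : u K.+1 * qbinom N K.+1 = u (N - K) * qbinom N K.
Proof.
rewrite !qbinomE; case: (ltngtP K N) => h.
- have -> : (N - K = (N - K.+1).+1)%N by lia.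
  rewrite !qfactS.
  apply: aL1; [exact: qfact_neq0 | exact: qfact_neq0 | exact: u_neq0 | exact: u_neq0 | exact: oneq_neq0].
- by rewrite !mulr0.
- by rewrite h subnn u0 mul0r mulr0.
Qed.

Lemma aL2 (F : fieldType) (fN fK fR uK uN c : F) : fK != 0 -> fR != 0 -> uK != 0 -> c != 0 ->
 uK * (fN * (uN / c) / (fK * (uK / c) * fR)) = uN * (fN / (fK * fR)).
Proof. move=> h1 h2 h3 h5; field; by rewrite h1 h2 h3 h5. Qed.

Lemma L2 (N K : nat) : u K.+1 * qbinom N.+1 K.+1 = u N.+1 * qbinom N K.
Proof.
rewrite !qbinomE ltnS subSS; case: (leqP K N) => h.
- rewrite !qfactS.
  apply: aL2; [exact: qfact_neq0 | exact: qfact_neq0 | exact: u_neq0 | exact: oneq_neq0].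
- by rewrite !mulr0.
Qed.

Lemma aL4 (F : fieldType) (fN fK fR uR uN c : F) : fK != 0 -> fR != 0 -> uR != 0 -> c != 0 ->
 uR * (fN * (uN / c) / (fK * (fR * (uR / c)))) = uN * (fN / (fK * fR)).
Proof. move=> h1 h2 h3 h5; field; by rewrite h1 h2 h3 h5. Qed.

Lemma L4 (N K : nat) : u (N.+1 - K) * qbinom N.+1 K = u N.+1 * qbinom N K.
Proof.
rewrite !qbinomE; case: (leqP K N) => h.
- rewrite (leq_trans h (leqnSn N)).
  have -> : (N.+1 - K = (N - K).+1)%N by lia.
  rewrite !qfactS.
  apply: aL4; [exact: qfact_neq0 | exact: qfact_neq0 | exact: u_neq0 | exact: oneq_neq0].
- case: (leqP K N.+1) => h2.
  + have -> : K = N.+1 by lia.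
    by rewrite subnn u0 !mul0r mulr0.
  + by rewrite !mulr0.
Qed.

Definition T (a i k : nat) : QF :=
  qq ^ (((a%:Z - k%:Z) * (i%:Z - k%:Z))%R)
     * (qbinom (i%:Z + k%:Z) (2 * k%:Z)
        + qq ^+ (a + i) * qbinom (i%:Z + k%:Z - 1) (2 * k%:Z - 1))
     * qbinom (3 * a + i)%:Z (a%:Z - k%:Z).

Definition h (a i k : nat) : QF :=
  - u (3 * a + i).+1 * qq ^ (((a%:Z - k%:Z + 1) * (i%:Z - k%:Z + 1))%R)
    * qbinom (i%:Z + k%:Z - 1) (2 * k%:Z - 2) * qbinom (3 * a + i)%:Z (a%:Z - k%:Z).

Lemma qqzD (m n : int) : qq ^ (m + n) = qq ^ m * qq ^ n.
Proof. by apply: expfzDr; exact: qq_neq0. Qed.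


Lemma master (F : fieldType) (E0 g pl ua1 un1 unl ul pa1 pa p2k C1 C2 C3 C4 C5 N1 N2 N3 : F) :
  N1 = g * un1 -> N2 = g * unl -> N3 = g * ul ->
  ua1 * (pl * (C1 + pa1 * C2) * un1) - un1 * ((C3 + pa * C4) * unl)
    = - un1 * C3 * ul + un1 * (pa1 / p2k) * C5 * unl ->
  ua1 * (E0 * pl * (C1 + pa1 * C2) * N1) - un1 * (E0 * (C3 + pa * C4) * N2)
    = - un1 * E0 * C3 * N3 - - un1 * (E0 * pa1 / p2k) * C5 * N2.
Proof.
move=> -> -> -> H.
transitivity (E0 * g * (ua1 * (pl * (C1 + pa1 * C2) * un1) - un1 * ((C3 + pa * C4) * unl))).
  ring.
rewrite H; ring.
Qed.

Lemma solve_eq (F : fieldType) (a x b : F) : a != 0 -> a * x = b -> x = b / a.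
Proof. by move=> ha <-; rewrite [a * x]mulrC mulfK. Qed.
Arguments solve_eq {F a x b}.


Lemma qbinom_eq1 (N K : int) : N = K -> 0 <= N -> qbinom N K = 1.
Proof.
move=> <- hN; rewrite /qbinom hN lexx /= subrr /= qfact0 mulr1.
exact: (divff (qfact_neq0 _)).
Qed.

Lemma qbinom_K0 (N K : int) : K = 0 -> 0 <= N -> qbinom N K = 1.
Proof.
move=> -> hN; rewrite /qbinom hN lexx /= subr0 /= qfact0 mul1r.
exact: (divff (qfact_neq0 _)).
Qed.

Lemma qbinom_gt (N K : int) : N < K -> qbinom N K = 0.
Proof.
move=> h; rewrite /qbinom; case: ifP => // /andP [_ h2].
by move: (lt_le_trans h h2); rewrite ltxx.
Qed.

Lemma case0 (F : fieldType) (Q A I ua1 un1 unl ul pl pa1 pa p2k : F) :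
 ua1 = 1 - Q ^+ 1 * A * I -> un1 = 1 - Q ^+ 1 * A ^+ 3 * I -> unl = 1 - Q ^+ 1 * A ^+ 2 * I ->
 ul = 1 - A -> pl = A ->
 ua1 * (pl * (1 + pa1 * 0) * un1) - un1 * ((1 + pa * 0) * unl)
   = - un1 * 1 * ul + un1 * (pa1 / p2k) * 0 * unl.
Proof. move=> -> -> -> -> ->; ring. Qed.

Lemma caseB (F : fieldType) (Q I L ua1 un1 unl ul pl pa1 pa p2k : F) : Q != 0 -> I != 0 ->
 ua1 = 1 - Q ^+ 2 * I ^+ 2 * L -> un1 = 1 - Q ^+ 4 * I ^+ 4 * L ^+ 3 ->
 unl = 1 - Q ^+ 4 * I ^+ 4 * L ^+ 2 -> ul = 1 - L -> pl = L ->
 pa1 = Q ^+ 2 * I ^+ 2 * L -> p2k = Q ^+ 2 * I ^+ 2 ->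
 ua1 * (pl * (1 + pa1 * 1) * un1) - un1 * ((0 + pa * 0) * unl)
   = - un1 * 0 * ul + un1 * (pa1 / p2k) * 1 * unl.
Proof. move=> hQ hI -> -> -> -> -> -> ->; field; by rewrite hQ hI. Qed.

Lemma caseC (F : fieldType) (ua1 un1 unl ul pl pa1 pa p2k : F) :
 ua1 * (pl * (0 + pa1 * 0) * un1) - un1 * ((0 + pa * 0) * unl)
   = - un1 * 0 * ul + un1 * (pa1 / p2k) * 0 * unl.
Proof. ring. Qed.

Lemma caseA (F : fieldType) (Q K J L u1 u2 uj uN1 uN2 ua1 un1 unl ul pl pa1 pa p2k C1 C2 C3 C4 C5 : F) :
 Q != 0 -> K != 0 -> u1 != 0 -> u2 != 0 -> uj != 0 ->
 u1 = 1 - Q ^+ 1 * K ^+ 2 -> u2 = 1 - Q ^+ 2 * K ^+ 2 -> uj = 1 - Q ^+ 1 * J ->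
 uN1 = 1 - Q ^+ 2 * K ^+ 2 * J -> uN2 = 1 - Q ^+ 3 * K ^+ 2 * J ->
 ua1 = 1 - Q ^+ 3 * K ^+ 2 * L * J -> un1 = 1 - Q ^+ 5 * K ^+ 4 * L ^+ 3 * J ->
 unl = 1 - Q ^+ 5 * K ^+ 4 * L ^+ 2 * J -> ul = 1 - L -> pl = L ->
 pa1 = Q ^+ 3 * K ^+ 2 * L * J -> pa = Q ^+ 2 * K ^+ 2 * L * J -> p2k = Q ^+ 2 * K ^+ 2 ->
 C4 = uj * C5 / u1 -> C3 = uN1 * C4 / u2 -> C2 = uN1 * C5 / u1 -> C1 = uN2 * C3 / uj ->
 ua1 * (pl * (C1 + pa1 * C2) * un1) - un1 * ((C3 + pa * C4) * unl)
   = - un1 * C3 * ul + un1 * (pa1 / p2k) * C5 * unl.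
Proof.
move=> hQ hK h1 h2 hj e1 e2 ej eN1 eN2 ea1 en1 enl el epl epa1 epa ep2k hC4 hC3 hC2 hC1.
have [b hC5] : exists b, C5 = b * u1 * u2.
  by exists (C5 / (u1 * u2)); field; rewrite h1 h2.
have e4 : C4 = uj * b * u2 by rewrite hC4 hC5; field; rewrite h1.
have e3 : C3 = uN1 * uj * b by rewrite hC3 e4; field; rewrite h2.
have e2' : C2 = uN1 * b * u2 by rewrite hC2 hC5; field; rewrite h1.
have e1' : C1 = uN2 * uN1 * b by rewrite hC1 e3; field; rewrite hj.
rewrite e1' e2' e3 e4 hC5 e1 e2 ej eN1 eN2 ea1 en1 enl el epl epa1 epa ep2k.
field; by rewrite ?hQ ?hK.
Qed.

Lemma L1z (N K K1 : int) (m1 m2 : nat) : 0 <= N -> 0 <= K -> K1 = K + 1 ->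
  m1%:Z = K + 1 -> m2%:Z = N - K -> u m1 * qbinom N K1 = u m2 * qbinom N K.
Proof.
case: N => // N; case: K => // K _ _ -> h1 h2.
have -> : m1 = K.+1 by lia.
have -> : m2 = (N - K)%N by lia.
have -> : Posz K + 1 = Posz K.+1 by lia.
exact: L1.
Qed.

Lemma L2z (N K N1 K1 : int) (m1 m2 : nat) : 0 <= N -> 0 <= K -> N1 = N + 1 -> K1 = K + 1 ->
  m1%:Z = K + 1 -> m2%:Z = N + 1 -> u m1 * qbinom N1 K1 = u m2 * qbinom N K.
Proof.
case: N => // N; case: K => // K _ _ -> -> h1 h2.
have -> : m1 = K.+1 by lia.
have -> : m2 = N.+1 by lia.
have -> : Posz K + 1 = Posz K.+1 by lia.
have -> : Posz N + 1 = Posz N.+1 by lia.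
exact: L2.
Qed.

Lemma L4z (N K N1 : int) (m1 m2 : nat) : 0 <= N -> 0 <= K -> N1 = N + 1 ->
  m1%:Z = N + 1 - K -> m2%:Z = N + 1 -> u m1 * qbinom N1 K = u m2 * qbinom N K.
Proof.
case: N => // N; case: K => // K _ _ -> h1 h2.
have -> : m1 = (N.+1 - K)%N by lia.
have -> : m2 = N.+1 by lia.
have -> : Posz N + 1 = Posz N.+1 by lia.
exact: L4.
Qed.

Ltac pw := rewrite -?exprM -?exprD; congr (_ ^+ _); lia.
Ltac ueq := first [ rewrite /u; congr (_ - _); pw | pw ].
Lemma Eloc (a i k : nat) : (k <= a)%N ->
  u (a + i).+1 * T a i.+1 k - u (3 * a + i).+1 * T a i k = h a i k.+1 - h a i k.
Proof.
move=> hk.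
have [l ->] : exists l, a = (k + l)%N by exists (a - k)%N; lia.
rewrite /T /h.
set E0 := qq ^ (((k + l)%:Z - k%:Z) * (i%:Z - k%:Z)).
have -> : qq ^ (((k + l)%:Z - k%:Z) * (i.+1%:Z - k%:Z)) = E0 * qq ^+ l.
  by rewrite /E0 exprnP -qqzD; congr (_ ^ _); nia.
have -> : qq ^ (((k + l)%:Z - k.+1%:Z + 1) * (i%:Z - k.+1%:Z + 1)) = E0.
  by rewrite /E0; congr (_ ^ _); nia.
have -> : qq ^ (((k + l)%:Z - k%:Z + 1) * (i%:Z - k%:Z + 1)) = E0 * qq ^+ (k + l + i).+1 * (qq ^+ (2 * k))^-1.
  by rewrite /E0 !exprnP invr_expz -!qqzD; congr (_ ^ _); nia.
have -> : i%:Z + k.+1%:Z - 1 = i%:Z + k%:Z by lia.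
have -> : 2 * k.+1%:Z - 2 = 2 * k%:Z by lia.
have -> : i.+1%:Z + k%:Z - 1 = i%:Z + k%:Z by lia.
rewrite !addnS.
have -> : (k + l)%N%:Z - k%:Z = l%:Z by lia.
set n := (3 * (k + l) + i)%N.
set g := qbinom n l / u (n - l).+1.
have hun : u (n - l).+1 != 0 by exact: u_neq0.
apply: (@master _ _ g _ _ (u n.+1) (u (n - l).+1) (u l)).
- have := L4 n l; rewrite (_ : (n.+1 - l = (n - l).+1)%N); last by rewrite /n; lia.
  move=> /(solve_eq hun) ->; by rewrite /g [RHS]mulrC mulrA.
- by rewrite /g (divfK hun).
- case: (posnP l) => hl.
  + rewrite qbinom_negK; last by lia.
    by rewrite hl u0 mulr0.
  + rewrite (_ : (k + l)%N%:Z - k.+1%:Z = (l.-1)%N%:Z); last by lia.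
    have := L1 n l.-1; rewrite prednK // (_ : (n - l.-1 = (n - l).+1)%N); last by rewrite /n; lia.
    move=> /esym /(solve_eq hun) ->; by rewrite /g [RHS]mulrC mulrA.
clear hun; rewrite {}/g {}/n.
case: (posnP k) => [k0|kpos].
  rewrite (@qbinom_K0 (i.+1%:Z + k%:Z) (2 * k%:Z)); [|lia|lia].
  rewrite (@qbinom_negK (i%:Z + k%:Z) (2 * k%:Z - 1)); last by lia.
  rewrite (@qbinom_K0 (i%:Z + k%:Z) (2 * k%:Z)); [|lia|lia].
  rewrite (@qbinom_negK (i%:Z + k%:Z - 1) (2 * k%:Z - 1)); last by lia.
  rewrite (@qbinom_negK (i%:Z + k%:Z - 1) (2 * k%:Z - 2)); last by lia.
  apply: (@case0 _ qq (qq ^+ l) (qq ^+ i)); ueq.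
case: (leqP k i) => hki.
  have hu1 : u (2 * k - 1)%N != 0 by apply: u_neq0; lia.
  have hu2 : u (2 * k)%N != 0 by apply: u_neq0; lia.
  have huj : u (i - k).+1 != 0 by apply: u_neq0; lia.
  have hC4 : qbinom (i%:Z + k%:Z - 1) (2 * k%:Z - 1)
      = u (i - k).+1 * qbinom (i%:Z + k%:Z - 1) (2 * k%:Z - 2) / u (2 * k - 1)%N.
    by apply: (solve_eq hu1); apply: L1z; lia.
  have hC3 : qbinom (i%:Z + k%:Z) (2 * k%:Z)
      = u (i + k) * qbinom (i%:Z + k%:Z - 1) (2 * k%:Z - 1) / u (2 * k)%N.
    by apply: (solve_eq hu2); apply: L2z; lia.
  have hC2 : qbinom (i%:Z + k%:Z) (2 * k%:Z - 1)
      = u (i + k) * qbinom (i%:Z + k%:Z - 1) (2 * k%:Z - 2) / u (2 * k - 1)%N.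
    by apply: (solve_eq hu1); apply: L2z; lia.
  have hC1 : qbinom (i.+1%:Z + k%:Z) (2 * k%:Z)
      = u (i + k).+1 * qbinom (i%:Z + k%:Z) (2 * k%:Z) / u (i - k).+1.
    by apply: (solve_eq huj); apply: L4z; lia.
  apply: (@caseA _ qq (qq ^+ (k - 1)) (qq ^+ (i - k)) (qq ^+ l) (u (2 * k - 1)%N) (u (2 * k)%N)
     (u (i - k).+1) (u (i + k)) (u (i + k).+1)).
  - exact: qq_neq0.
  - exact: (expf_neq0 _ qq_neq0).
  - exact: hu1.
  - exact: hu2.
  - exact: huj.
  1-13: ueq.
  - exact: hC4.
  - exact: hC3.
  - exact: hC2.
  - exact: hC1.
rewrite (@qbinom_gt (i%:Z + k%:Z) (2 * k%:Z)); last by lia.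
rewrite (@qbinom_gt (i%:Z + k%:Z - 1) (2 * k%:Z - 1)); last by lia.
case: (ltngtP k i.+1) => hki2.
- by move: hki2; rewrite ltnNge hki.
- rewrite (@qbinom_gt (i.+1%:Z + k%:Z) (2 * k%:Z)); last by lia.
  rewrite (@qbinom_gt (i%:Z + k%:Z) (2 * k%:Z - 1)); last by lia.
  rewrite (@qbinom_gt (i%:Z + k%:Z - 1) (2 * k%:Z - 2)); last by lia.
  exact: caseC.
- rewrite (@qbinom_eq1 (i.+1%:Z + k%:Z) (2 * k%:Z)); [|lia|lia].
  rewrite (@qbinom_eq1 (i%:Z + k%:Z) (2 * k%:Z - 1)); [|lia|lia].
  rewrite (@qbinom_eq1 (i%:Z + k%:Z - 1) (2 * k%:Z - 2)); [|lia|lia].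
  apply: (@caseB _ qq (qq ^+ i) (qq ^+ l)).
  + exact: qq_neq0.
  + exact: (expf_neq0 _ qq_neq0).
  all: ueq.
Qed.

Lemma h_end (a i : nat) : h a i a.+1 = 0.
Proof. by rewrite /h (@qbinom_negK _ (a%:Z - a.+1%:Z)) ?mulr0 //; lia. Qed.

Lemma h_0 (a i : nat) : h a i 0 = 0.
Proof. by rewrite /h (@qbinom_negK _ (2 * 0%:Z - 2)) ?mulr0 ?mul0r //; lia. Qed.

Lemma mainS (a i : nat) :
  qbinom (3 * a + i)%:Z (a + i)%:Z = \sum_(0 <= k < a.+1) T a i k.
Proof.
elim: i => [|i IH].
  rewrite big_ltn // big_nat_cond big1 ?addr0.
    rewrite /T (@qbinom_K0 (0%:Z + 0%:Z) (2 * 0%:Z)); [|lia|lia].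
    rewrite (@qbinom_negK (0%:Z + 0%:Z - 1) (2 * 0%:Z - 1)); last by lia.
    rewrite (_ : (a%:Z - 0%:Z) * (0%:Z - 0%:Z) = 0); last by lia.
    rewrite expr0z mul1r mulr0 addr0 mul1r.
    congr qbinom; lia.
  move=> k /andP [/andP [hk1 _] _].
  rewrite /T (@qbinom_gt (0%:Z + k%:Z) (2 * k%:Z)); last by lia.
  by rewrite (@qbinom_gt (0%:Z + k%:Z - 1) (2 * k%:Z - 1)) ?mulr0 ?add0r ?mulr0 ?mul0r //; lia.
have key : \sum_(0 <= k < a.+1) (u (a + i).+1 * T a i.+1 k - u (3 * a + i).+1 * T a i k) = 0.
  have e : forall k, (0 <= k < a.+1)%N ->
      u (a + i).+1 * T a i.+1 k - u (3 * a + i).+1 * T a i k = h a i k.+1 - h a i k.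
    by move=> k /andP [_ hk]; exact: Eloc.
  rewrite (eq_big_nat _ _ e).
  by rewrite telescope_sumr // h_end h_0 subr0.
apply: (mulfI (u_neq0 (a + i).+1 (ltn0Sn _))).
rewrite !addnS L2 IH !big_distrr /=.
apply/eqP; rewrite eq_sym -subr_eq0 -sumrB key.
exact: eqxx.
Qed.

Theorem lemma5 (a i : nat) (ha : (0 < a)%N) (hi : (0 < i)%N) :
  qbinom (3 * a + i)%:Z (a + i)%:Z =
  \sum_(0 <= k < a.+1)
     qq ^ (((a%:Z - k%:Z) * (i%:Z - k%:Z))%R)
     * (qbinom (i%:Z + k%:Z) (2 * k%:Z)
        + qq ^+ (a + i) * qbinom (i%:Z + k%:Z - 1) (2 * k%:Z - 1))
     * qbinom (3 * a + i)%:Z (a%:Z - k%:Z).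
Proof. exact: (mainS a i). Qed.
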